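(* Let $N\ge2$, $n=2^N-1$, $\lambda,\tau\in[-1,1]$, and let $\hat T_\mu$ ($\mu\in\{0,1\}^N$) be as in the context. Define $$\phi^{(\lambda)}_\mu=\begin{pmatrix}1&\mathbf 0\\ \mathbf 0&\lambda\hat T_\mu\end{pmatrix},\qquad E^{(\tau)}_\mu=2^{-N}\begin{pmatrix}1&\mathbf 0\\ \mathbf 0&\tau\hat T_\mu\end{pmatrix},$$ let $\mathcal T=\{\mathrm{diag}(1,\hat T):\hat T\in\mathrm{SO}(n)\}$, and let $\Omega_{AB}$ be the convex hull of $\Omega_A\otimes_{\min}\Omega_B$ and $\{T\phi^{(\lambda)}_{\mathbf 0}T'^{\mathrm t}:T,T'\in\mathcal T\}$. Then $\sum_\mu E^{(\tau)}_\mu=u\otimes u$, and: (a) if $E^{(\tau)}_{\mathbf 0}\in\mathcal E_{AB}$, then $-\frac{1}{2^N-1}\le\lambda\tau\le\frac{1}{2^N-3}$; (b) for all $x,y\in\{0,1\}^N$, $E^{(\tau)}_y\cdot\phi^{(\lambda)}_x=\lambda\tau\,\delta_{y,x}+2^{-N}(1-\lambda\tau)$, and with uniform messages $p_x=2^{-N}$, encoding states $\phi^{(\lambda)}_x$ and measurement $\{E^{(\tau)}_y\}$, the mutual information is $$I(X:Y)=N-h(P)-(1-P)\log_2(2^N-1),\qquad P=2^{-N}\big(1+(2^N-1)\lambda\tau\big),$$ where $h(p)=-p\log_2p-(1-p)\log_2(1-p)$.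
   Context: The $n$-dimensional hypersphere theory has state space $\Omega_n=\{(1,r)^{\mathrm t}: r\in\mathbb R^n,\ \lVert r\rVert\le1\}$, unit effect $u=(1,\mathbf 0)^{\mathrm t}$; $\Omega_A=\Omega_B=\Omega_n$. Bipartite states are real $(n+1)\times(n+1)$ matrices, identified with $\mathbb R^{n+1}\otimes\mathbb R^{n+1}$ via $v\otimes w=vw^{\mathrm t}$, inner product $X\cdot Y=\mathrm{Tr}(X^{\mathrm t}Y)$; $\Omega_A\otimes_{\min}\Omega_B$ is the convex hull of product states; $\mathcal E_{AB}=\{E:0\le E\cdot\phi\le1\ \forall\phi\in\Omega_{AB}\}$. Coordinates of $\mathbb R^{2^N}$ are indexed by $\nu\in\{0,1\}^N$ with $\nu=\mathbf 0$ first; $(d_\mu)_\nu=(-1)^{\mu\cdot\nu}$ ($\mu\cdot\nu$ = inner product mod 2); $\mathrm{diag}(d_\mu)=\mathrm{diag}(1,\hat T_\mu)$ defines the diagonal $n\times n$ matrix $\hat T_\mu$ with $\pm1$ entries. $I(X:Y)=\sum_{x,y}p(x,y)\log_2\frac{p(x,y)}{p(x)p(y)}$. *)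

(* Defs.v *)
From Stdlib Require Import Reals Lra Lia.
Open Scope R_scope.

Fixpoint sumR (n : nat) (f : nat -> R) : R :=
  match n with O => 0 | S k => sumR k f + f k end.

(* real matrices / vectors as functions of (nat) indices; only the entries
   with indices < dimension are ever used *)
Definition Mat := nat -> nat -> R.
Definition Vec := nat -> R.

Definition hsdim (N : nat) : nat := Nat.pow 2 N.
Definition hsn (N : nat) : nat := (Nat.pow 2 N - 1)%nat.

(* bit strings nu in {0,1}^N are encoded by naturals < 2^N, nu_k = testbit nu k;
   nu = 0 (the zero string) is coordinate 0. *)
Fixpoint bcount (N k : nat) : nat :=
  match N with O => O | S M => (bcount M k + (if Nat.testbit k M then 1 else 0))%nat end.

Definition bdot (N mu nu : nat) : bool := Nat.odd (bcount N (Nat.land mu nu)).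

Definition dvec (N mu nu : nat) : R := if bdot N mu nu then -1 else 1.

(* hat T_mu : n x n diagonal matrix with diag(d_mu) = diag(1, hat T_mu);
   its i-th row/column corresponds to coordinate nu = i+1 *)
Definition hatT (N mu : nat) : Mat :=
  fun i j => if Nat.eqb i j then dvec N mu (S i) else 0.

Definition blk (c : R) (M : Mat) : Mat :=
  fun i j => match i, j with
             | O, O => 1
             | S i', S j' => c * M i' j'
             | _, _ => 0
             end.

Definition hsPhi (N : nat) (lam : R) (mu : nat) : Mat := blk lam (hatT N mu).
Definition hsE (N : nat) (tau : R) (mu : nat) : Mat :=
  fun i j => / 2 ^ N * blk tau (hatT N mu) i j.

Definition matmul (d : nat) (A B : Mat) : Mat :=
  fun i j => sumR d (fun k => A i k * B k j).
Definition transp (A : Mat) : Mat := fun i j => A j i.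
Definition inner (d : nat) (X Y : Mat) : R :=
  sumR d (fun i => sumR d (fun j => X i j * Y i j)).
(* v (x) w = v w^t *)
Definition outer (v w : Vec) : Mat := fun i j => v i * w j.
Definition meq (d : nat) (X Y : Mat) : Prop :=
  forall i j, (i < d)%nat -> (j < d)%nat -> X i j = Y i j.

Definition minor (A : Mat) (j : nat) : Mat :=
  fun i k => A (S i) (if Nat.ltb k j then k else S k).
Fixpoint det (n : nat) (A : Mat) : R :=
  match n with
  | O => 1
  | S m => sumR (S m) (fun j => (-1) ^ j * A O j * det m (minor A j))
  end.

Definition SOn (n : nat) (M : Mat) : Prop :=
  (forall i j, (i < n)%nat -> (j < n)%nat ->
     sumR n (fun k => M k i * M k j) = if Nat.eqb i j then 1 else 0)
  /\ det n M = 1.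

Definition conv (d : nat) (S : Mat -> Prop) (X : Mat) : Prop :=
  exists (m : nat) (w : nat -> R) (Z : nat -> Mat),
    (forall k, (k < m)%nat -> 0 <= w k /\ S (Z k)) /\
    sumR m w = 1 /\
    meq d X (fun i j => sumR m (fun k => w k * Z k i j)).

Definition inOmega (n : nat) (v : Vec) : Prop :=
  v O = 1 /\ sumR n (fun i => v (S i) ^ 2) <= 1.

Definition OmegaMin (N : nat) (X : Mat) : Prop :=
  conv (hsdim N)
    (fun Y => exists v w, inOmega (hsn N) v /\ inOmega (hsn N) w /\
                          meq (hsdim N) Y (outer v w)) X.

Definition calT (n : nat) (T : Mat) : Prop :=
  T O O = 1 /\ (forall j, (1 <= j <= n)%nat -> T O j = 0 /\ T j O = 0) /\
  SOn n (fun i j => T (S i) (S j)).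

Definition OmegaAB (N : nat) (lam : R) (X : Mat) : Prop :=
  conv (hsdim N)
    (fun Y => OmegaMin N Y \/
       exists T T', calT (hsn N) T /\ calT (hsn N) T' /\
         meq (hsdim N) Y
           (matmul (hsdim N) (matmul (hsdim N) T (hsPhi N lam O)) (transp T'))) X.

Definition inEAB (N : nat) (lam : R) (E : Mat) : Prop :=
  forall X, OmegaAB N lam X -> 0 <= inner (hsdim N) E X <= 1.

Definition uvec : Vec := fun i => if Nat.eqb i O then 1 else 0.

Definition log2 (x : R) : R := ln x / ln 2.

Definition xlog (x : R) : R := if Req_EM_T x 0 then 0 else x * log2 x.
Definition hbin (p : R) : R := - xlog p - xlog (1 - p).
Definition plogq (a b : R) : R := if Req_EM_T a 0 then 0 else a * log2 (a / b).

Definition MI (m : nat) (p : nat -> nat -> R) : R :=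
  sumR m (fun x => sumR m (fun y =>
    plogq (p x y) (sumR m (fun y' => p x y') * sumR m (fun x' => p x' y)))).

Definition hsJoint (N : nat) (lam tau : R) : nat -> nat -> R :=
  fun x y => / 2 ^ N * inner (hsdim N) (hsE N tau y) (hsPhi N lam x).

(* Main.v *)
Require Import Defs.
From Stdlib Require Import Reals Lra Lia Arith.
Open Scope R_scope.

Lemma sumR_ext n f g : (forall i, (i < n)%nat -> f i = g i) -> sumR n f = sumR n g.
Proof. induction n; simpl; intros H; auto. rewrite IHn by (intros; apply H; lia). rewrite H by lia; auto. Qed.

Lemma sumR_plus n f g : sumR n (fun i => f i + g i) = sumR n f + sumR n g.
Proof. induction n; simpl; [lra|]. rewrite IHn; lra. Qed.

Lemma sumR_scal n c f : sumR n (fun i => c * f i) = c * sumR n f.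
Proof. induction n; simpl; [lra|]. rewrite IHn; lra. Qed.

Lemma sumR_const n c : sumR n (fun _ => c) = INR n * c.
Proof. induction n; simpl sumR; [simpl; lra|]. rewrite IHn, S_INR; lra. Qed.

Lemma sumR_zero n f : (forall i, (i < n)%nat -> f i = 0) -> sumR n f = 0.
Proof. intros H. rewrite (sumR_ext n f (fun _ => 0)) by auto. rewrite sumR_const; lra. Qed.

Lemma sumR_single n f i : (i < n)%nat -> (forall j, (j < n)%nat -> j <> i -> f j = 0) ->
  sumR n f = f i.
Proof.
  induction n; intros Hi H; [lia|]. simpl.
  destruct (Nat.eq_dec i n).
  - subst. rewrite sumR_zero; [lra|]. intros j Hj; apply H; lia.
  - rewrite IHn by (try lia; intros; apply H; lia). rewrite (H n) by lia. lra.
Qed.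

Lemma sumR_ite n x A B : (x < n)%nat ->
  sumR n (fun y => if Nat.eqb y x then A else B) = A + (INR n - 1) * B.
Proof.
  intros Hx.
  rewrite (sumR_ext n _ (fun y => B + (if Nat.eqb y x then A - B else 0))).
  2:{ intros i _. destruct (Nat.eqb i x); lra. }
  rewrite sumR_plus, sumR_const.
  rewrite (sumR_single n _ x Hx). rewrite Nat.eqb_refl; lra.
  intros j _ Hj. apply Nat.eqb_neq in Hj. rewrite Hj; auto.
Qed.

Lemma sumR_head n f : sumR (S n) f = f O + sumR n (fun i => f (S i)).
Proof. induction n; simpl in *; [lra|]. rewrite IHn. lra. Qed.

Lemma sumR_app a b f : sumR (a + b) f = sumR a f + sumR b (fun k => f (k + a)%nat).
Proof. induction b; simpl. rewrite Nat.add_0_r; lra. rewrite Nat.add_succ_r. simpl. rewrite IHb.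
  rewrite (Nat.add_comm b a). lra. Qed.

Lemma dvec_0 mu nu : dvec 0 mu nu = 1.
Proof. reflexivity. Qed.

Lemma dvec_S M mu nu : dvec (S M) mu nu =
  dvec M mu nu * (if (Nat.testbit mu M && Nat.testbit nu M)%bool then -1 else 1).
Proof.
  unfold dvec, bdot. simpl bcount. rewrite Nat.odd_add, Nat.land_spec.
  destruct (Nat.odd (bcount M (Nat.land mu nu))), (Nat.testbit mu M), (Nat.testbit nu M);
  simpl; lra.
Qed.

Lemma dvec_ext M mu a b : (forall k, (k < M)%nat -> Nat.testbit a k = Nat.testbit b k) ->
  dvec M mu a = dvec M mu b.
Proof. induction M; intros H; auto. rewrite !dvec_S, IHM by (intros; apply H; lia). rewrite (H M) by lia. auto. Qed.

Lemma dvec_sym N mu nu : dvec N mu nu = dvec N nu mu.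
Proof. unfold dvec, bdot. rewrite Nat.land_comm. auto. Qed.

Lemma dvec_mul N x y nu : dvec N x nu * dvec N y nu = dvec N (Nat.lxor x y) nu.
Proof.
  induction N. rewrite !dvec_0; lra.
  rewrite !dvec_S, <- IHN, Nat.lxor_spec.
  destruct (Nat.testbit x N), (Nat.testbit y N), (Nat.testbit nu N); simpl; ring.
Qed.

Lemma dvec_zero_r N mu : dvec N mu 0 = 1.
Proof. induction N. auto. rewrite dvec_S, IHN, Nat.bits_0, Bool.andb_false_r. lra. Qed.

Lemma dvec_zero_l N nu : dvec N 0 nu = 1.
Proof. rewrite dvec_sym. apply dvec_zero_r. Qed.

Fixpoint cnt (N mu : nat) : R :=
  match N with O => 1 | S M => cnt M mu * (if Nat.testbit mu M then 0 else 2) end.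

Lemma testbit_small a k : (a < 2 ^ k)%nat -> Nat.testbit a k = false.
Proof. intros H. rewrite Nat.testbit_eqb, Nat.div_small by auto. reflexivity. Qed.

Lemma sum_dvec N mu : sumR (2 ^ N) (fun nu => dvec N mu nu) = cnt N mu.
Proof.
  induction N. simpl. rewrite dvec_0. lra.
  assert (E : (2 ^ S N = 2 ^ N + 2 ^ N)%nat) by (simpl; lia).
  rewrite E, sumR_app. simpl cnt.
  assert (HP : (2 ^ N <> 0)%nat) by (apply Nat.pow_nonzero; lia).
  rewrite (sumR_ext _ (fun nu => dvec (S N) mu nu) (fun nu => dvec N mu nu)).
  2:{ intros i Hi. rewrite dvec_S, (testbit_small i N Hi), Bool.andb_false_r. lra. }
  rewrite (sumR_ext _ (fun k => dvec (S N) mu (k + 2 ^ N)%nat)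
             (fun nu => (if Nat.testbit mu N then -1 else 1) * dvec N mu nu)).
  2:{ intros i Hi. rewrite dvec_S.
      assert (T1 : Nat.testbit (i + 2 ^ N) N = true).
      { rewrite Nat.testbit_eqb. replace (i + 2 ^ N)%nat with (i + 1 * 2 ^ N)%nat by lia.
        rewrite Nat.div_add by auto. rewrite Nat.div_small by auto. reflexivity. }
      rewrite T1, Bool.andb_true_r.
      rewrite (dvec_ext N mu (i + 2 ^ N)%nat i). lra.
      intros k Hk. rewrite <- (Nat.mod_pow2_bits_low (i + 2 ^ N) N k Hk).
      replace (i + 2 ^ N)%nat with (i + 1 * 2 ^ N)%nat by lia.
      rewrite Nat.Div0.mod_add, Nat.mod_small by auto. auto. }
  rewrite sumR_scal. change (sumR (2 ^ N) (dvec N mu)) with (sumR (2 ^ N) (fun nu => dvec N mu nu)). rewrite IHN. destruct (Nat.testbit mu N); lra.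
Qed.

Lemma cnt_all0 N mu : (forall k, (k < N)%nat -> Nat.testbit mu k = false) -> cnt N mu = 2 ^ N.
Proof. induction N; intros H; simpl; auto. rewrite IHN, H by (auto; intros; apply H; lia). lra. Qed.

Lemma cnt_some N mu k : (k < N)%nat -> Nat.testbit mu k = true -> cnt N mu = 0.
Proof.
  induction N; intros Hk Hb; [lia|]. simpl.
  destruct (Nat.eq_dec k N). subst. rewrite Hb. lra.
  rewrite IHN by (auto; lia). lra.
Qed.

Lemma bitnz N a : (forall k, (N <= k)%nat -> Nat.testbit a k = false) -> a <> 0%nat ->
  exists k, (k < N)%nat /\ Nat.testbit a k = true.
Proof.
  intros H Ha. exists (Nat.log2 a). pose proof (Nat.bit_log2 a Ha).
  destruct (Nat.lt_ge_cases (Nat.log2 a) N); auto. rewrite H in H0 by auto. discriminate.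
Qed.

Lemma small_bits N a : (a < 2 ^ N)%nat -> forall k, (N <= k)%nat -> Nat.testbit a k = false.
Proof.
  intros H k Hk. apply testbit_small. pose proof (Nat.pow_le_mono_r 2 N k ltac:(lia) Hk). lia.
Qed.

Lemma sum_dvec_val N mu : (mu < 2 ^ N)%nat ->
  sumR (2 ^ N) (fun nu => dvec N mu nu) = if Nat.eqb mu 0 then 2 ^ N else 0.
Proof.
  intros H. rewrite sum_dvec. destruct (Nat.eqb_spec mu 0).
  subst. apply cnt_all0. intros; apply Nat.bits_0.
  destruct (bitnz N mu (small_bits N mu H) n) as [k [Hk Hb]]. eapply cnt_some; eauto.
Qed.

Lemma sum_dvec_xor N x y : (x < 2 ^ N)%nat -> (y < 2 ^ N)%nat ->
  sumR (2 ^ N) (fun nu => dvec N (Nat.lxor y x) nu) = if Nat.eqb y x then 2 ^ N else 0.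
Proof.
  intros Hx Hy. rewrite sum_dvec. destruct (Nat.eqb_spec y x).
  subst. rewrite Nat.lxor_nilpotent. apply cnt_all0. intros; apply Nat.bits_0.
  assert (Hz : Nat.lxor y x <> 0%nat) by (rewrite Nat.lxor_eq_0_iff; auto).
  destruct (bitnz N _ ltac:(intros k Hk; rewrite Nat.lxor_spec, (small_bits N y Hy k Hk), (small_bits N x Hx k Hk); auto) Hz)
    as [k [Hk Hb]]. eapply cnt_some; eauto.
Qed.

Lemma INR_hsdim N : INR (hsdim N) = 2 ^ N.
Proof. unfold hsdim. rewrite pow_INR. replace (INR 2) with 2 by (simpl; lra). reflexivity. Qed.

Lemma pow2_pos N : (1 <= 2 ^ N)%nat.
Proof. pose proof (Nat.pow_nonzero 2 N ltac:(lia)). lia. Qed.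

Lemma hsdim_S N : hsdim N = S (hsn N).
Proof. unfold hsdim, hsn. pose proof (pow2_pos N). lia. Qed.

Lemma INR_hsn N : INR (hsn N) = 2 ^ N - 1.
Proof. rewrite <- INR_hsdim, hsdim_S, S_INR. lra. Qed.

Lemma D_ge4 N : (2 <= N)%nat -> 4 <= 2 ^ N.
Proof. intros H. rewrite <- INR_hsdim. replace 4 with (INR 4) by (simpl; lra).
  apply le_INR. unfold hsdim. pose proof (Nat.pow_le_mono_r 2 2 N ltac:(lia) H). simpl in *. lia. Qed.

Lemma partSum N tau :
  meq (hsdim N) (fun i j => sumR (hsdim N) (fun mu => hsE N tau mu i j)) (outer uvec uvec).
Proof.
  intros [|i] [|j] Hi Hj; unfold hsE, blk, outer, uvec; cbn [Nat.eqb].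
  - rewrite sumR_const, INR_hsdim. field. apply pow_nonzero; lra.
  - rewrite sumR_zero; [ring|]; intros; ring.
  - rewrite sumR_zero; [ring|]; intros; ring.
  - unfold hatT. destruct (Nat.eqb_spec i j).
    + subst. rewrite (sumR_ext _ _ (fun mu => / 2 ^ N * tau * dvec N (S j) mu)).
      2:{ intros; rewrite dvec_sym; ring. }
      rewrite sumR_scal. unfold hsdim. rewrite sum_dvec_val. simpl. ring.
      unfold hsdim in Hi. lia.
    + rewrite sumR_zero; [ring|]; intros; ring.
Qed.

Lemma phi_offdiag N lam x i j : i <> j -> hsPhi N lam x i j = 0.
Proof. intros H. unfold hsPhi, blk, hatT. destruct i, j; try lia; auto.
  destruct (Nat.eqb_spec i j); [lia| ring]. Qed.

Lemma partC N lam tau x y : (x < hsdim N)%nat -> (y < hsdim N)%nat ->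
  inner (hsdim N) (hsE N tau y) (hsPhi N lam x) =
       lam * tau * (if Nat.eqb y x then 1 else 0) + / 2 ^ N * (1 - lam * tau).
Proof.
  intros Hx Hy. unfold inner.
  rewrite (sumR_ext _ _ (fun i => hsE N tau y i i * hsPhi N lam x i i)).
  2:{ intros i Hi. apply (sumR_single (hsdim N) (fun j => hsE N tau y i j * hsPhi N lam x i j) i Hi). intros j _ Hj. rewrite phi_offdiag by auto. ring. }
  rewrite (sumR_ext _ _ (fun nu => / 2 ^ N * (lam * tau) * dvec N (Nat.lxor y x) nu
                              + (if Nat.eqb nu 0 then / 2 ^ N * (1 - lam * tau) else 0))).
  2:{ intros [|i] Hi; unfold hsE, hsPhi, blk, hatT; cbn [Nat.eqb].
      - rewrite <- dvec_mul, !dvec_zero_r. ring.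
      - rewrite Nat.eqb_refl, <- dvec_mul. ring. }
  rewrite sumR_plus, sumR_scal. unfold hsdim in *. rewrite sum_dvec_xor by auto.
  rewrite sumR_ite by (pose proof (pow2_pos N); lia).
  assert (2 ^ N <> 0) by (apply pow_nonzero; lra).
  destruct (Nat.eqb y x); field; auto.
Qed.

Fixpoint prodR (n : nat) (f : nat -> R) : R :=
  match n with O => 1 | S m => f O * prodR m (fun i => f (S i)) end.

Lemma prodR_ext n f g : (forall i, f i = g i) -> prodR n f = prodR n g.
Proof. revert f g; induction n; intros f g H; simpl; auto. rewrite H, (IHn _ (fun i => g (S i))); auto. Qed.

Lemma prodR_const n c : prodR n (fun _ => c) = c ^ n.
Proof. induction n; simpl; auto. rewrite IHn; auto. Qed.

Lemma det_diag n A : (forall i j, i <> j -> A i j = 0) -> det n A = prodR n (fun i => A i i).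
Proof.
  revert A; induction n; intros A H. reflexivity.
  change (det (S n) A) with (sumR (S n) (fun j => (-1) ^ j * A O j * det n (minor A j))).
  rewrite (sumR_single (S n) (fun j => (-1) ^ j * A O j * det n (minor A j)) O ltac:(lia)).
  - rewrite IHn. simpl. rewrite (prodR_ext n _ (fun i => A (S i) (S i))). ring. intros i. unfold minor. reflexivity.
    intros i j Hij. unfold minor. simpl. apply H. lia.
  - intros j _ Hj. rewrite H by auto. ring.
Qed.

Definition diagM (g : nat -> R) : Mat := fun i j => if Nat.eqb i j then g i else 0.

Lemma calT_diag n g : g O = 1 -> (forall i, (i < n)%nat -> g (S i) * g (S i) = 1) ->
  prodR n (fun i => g (S i)) = 1 -> calT n (diagM g).
Proof.
  intros H0 Hsq Hp. unfold calT, SOn, diagM. split; [auto|]. split.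
  { intros [|j] Hj; [lia|]. cbn [Nat.eqb]. auto. }
  split.
  - intros i j Hi Hj.
    rewrite (sumR_single n (fun k => (if Nat.eqb (S k) (S i) then g (S k) else 0) *
                                     (if Nat.eqb (S k) (S j) then g (S k) else 0)) i Hi).
    + cbn [Nat.eqb]. rewrite Nat.eqb_refl. destruct (Nat.eqb_spec i j). subst. auto. ring.
    + intros k _ Hk. cbn [Nat.eqb]. apply Nat.eqb_neq in Hk. rewrite Hk. ring.
  - rewrite det_diag. rewrite <- Hp. apply prodR_ext. intros i. cbn [Nat.eqb].
    rewrite Nat.eqb_refl. auto.
    intros i j Hij. cbn [Nat.eqb]. apply Nat.eqb_neq in Hij. rewrite Hij. auto.
Qed.

Lemma matmul_diagL d A B i j : (forall k, k <> i -> A i k = 0) -> (i < d)%nat ->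
  matmul d A B i j = A i i * B i j.
Proof. intros H Hi. unfold matmul. apply (sumR_single d (fun k => A i k * B k j) i Hi).
  intros k _ Hk. rewrite H; auto; ring. Qed.

Lemma matmul_diagR d A B i j : (forall k, k <> j -> B k j = 0) -> (j < d)%nat ->
  matmul d A B i j = A i j * B j j.
Proof. intros H Hj. unfold matmul. apply (sumR_single d (fun k => A i k * B k j) j Hj).
  intros k _ Hk. rewrite H; auto; ring. Qed.

Definition Xg (N : nat) (lam : R) (g : nat -> R) : Mat :=
  matmul (hsdim N) (matmul (hsdim N) (diagM g) (hsPhi N lam O)) (transp (diagM (fun _ => 1))).

Lemma Xg_val N lam g i j : (i < hsdim N)%nat -> (j < hsdim N)%nat ->
  Xg N lam g i j = g i * hsPhi N lam O i j.
Proof.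
  intros Hi Hj. unfold Xg. rewrite matmul_diagR; auto.
  - rewrite matmul_diagL; auto. unfold transp, diagM. rewrite !Nat.eqb_refl. ring.
    intros k Hk. unfold diagM. apply Nat.eqb_neq in Hk. rewrite Nat.eqb_sym, Hk. auto.
  - intros k Hk. unfold transp, diagM. apply Nat.eqb_neq in Hk. rewrite Nat.eqb_sym, Hk. auto.
Qed.

Lemma inner_Xg N lam tau g : g O = 1 ->
  inner (hsdim N) (hsE N tau O) (Xg N lam g) =
  / 2 ^ N * (1 + tau * lam * sumR (hsn N) (fun i => g (S i))).
Proof.
  intros H0. unfold inner.
  rewrite (sumR_ext _ _ (fun i => hsE N tau O i i * (g i * hsPhi N lam O i i))).
  2:{ intros i Hi.
      rewrite (sumR_ext _ _ (fun j => hsE N tau O i j * (g i * hsPhi N lam O i j))).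
      2:{ intros j Hj. rewrite Xg_val; auto. }
      apply (sumR_single (hsdim N) (fun j => hsE N tau O i j * (g i * hsPhi N lam O i j)) i Hi).
      intros j _ Hj. rewrite phi_offdiag by auto. ring. }
  rewrite hsdim_S, sumR_head.
  rewrite (sumR_ext _ _ (fun i => / 2 ^ N * tau * lam * g (S i))).
  2:{ intros i Hi. unfold hsE, hsPhi, blk, hatT. rewrite Nat.eqb_refl, dvec_zero_l. ring. }
  rewrite sumR_scal. unfold hsE, hsPhi, blk. rewrite H0. ring.
Qed.

Lemma OmegaAB_Xg N lam g : calT (hsn N) (diagM g) -> OmegaAB N lam (Xg N lam g).
Proof.
  intros HT. unfold OmegaAB, conv. exists 1%nat, (fun _ => 1), (fun _ => Xg N lam g).
  split; [|split].
  - intros k Hk. split; [lra|]. right. exists (diagM g), (diagM (fun _ => 1)).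
    split; auto. split.
    + apply calT_diag; auto. intros; ring. rewrite prodR_const, pow1. auto.
    + intros i j _ _. reflexivity.
  - simpl. ring.
  - intros i j _ _. simpl. ring.
Qed.

Definition g2 (i : nat) : R := match i with O => 1 | S i' => if Nat.eqb i' 0 then 1 else -1 end.

Lemma partA N lam tau : (2 <= N)%nat -> inEAB N lam (hsE N tau O) ->
  - (1 / (2 ^ N - 1)) <= lam * tau <= 1 / (2 ^ N - 3).
Proof.
  intros HN HE. pose proof (D_ge4 N HN) as HD.
  assert (HinvD : 0 < / 2 ^ N) by (apply Rinv_0_lt_compat; lra).
  pose proof (HE _ (OmegaAB_Xg N lam (fun _ => 1) ltac:(apply calT_diag; auto; intros; try ring; rewrite prodR_const, pow1; auto))) as H1.
  rewrite inner_Xg in H1 by auto. rewrite sumR_const, INR_hsn in H1.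
  assert (Hn : hsn N = S (hsn N - 1)).
  { pose proof (hsdim_S N). unfold hsdim, hsn in *. pose proof (Nat.pow_le_mono_r 2 2 N ltac:(lia) HN) as Hq. simpl in Hq. lia. }
  assert (HT2 : calT (hsn N) (diagM g2)).
  { apply calT_diag; auto.
    - intros [|i] _; simpl; [ring|]. ring.
    - rewrite Hn. simpl.
      rewrite prodR_const.
      replace (hsn N - 1)%nat with (2 * (2 ^ (N - 1) - 1))%nat. rewrite pow_1_even. ring.
      unfold hsn. destruct N as [|M]; [lia|]. replace (S M - 1)%nat with M by lia.
      simpl. pose proof (pow2_pos M). lia. }
  pose proof (HE _ (OmegaAB_Xg N lam g2 HT2)) as H2.
  rewrite inner_Xg in H2 by auto.
  change (sumR (hsn N) (fun i => g2 (S i))) with (sumR (hsn N) (fun i => if Nat.eqb i 0 then 1 else -1)) in H2.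
  rewrite sumR_ite, INR_hsn in H2 by lia.
  destruct H1 as [H1 _]. destruct H2 as [H2 _].
  set (D := 2 ^ N) in *.
  assert (A1 : 0 <= 1 + tau * lam * (D - 1)) by nra.
  assert (A2 : 0 <= 1 + tau * lam * (1 + (D - 1 - 1) * -1)) by nra.
  split.
  - apply (Rmult_le_reg_r (D - 1)); [lra|].
    replace (- (1 / (D - 1)) * (D - 1)) with (-1) by (field; lra). nra.
  - apply (Rmult_le_reg_r (D - 3)); [lra|].
    replace (1 / (D - 3) * (D - 3)) with 1 by (field; lra). nra.
Qed.

Lemma ln2_pos : 0 < ln 2.
Proof. pose proof ln_lt_2. lra. Qed.

Lemma xlog_0 : xlog 0 = 0.
Proof. unfold xlog. destruct (Req_EM_T 0 0); auto; lra. Qed.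

Lemma plogq_xlog c p b : 0 < c -> 0 < b -> 0 <= p ->
  plogq (p * c) b = c * xlog p + p * c * log2 (c / b).
Proof.
  intros Hc Hb Hp. unfold plogq, xlog.
  destruct (Req_EM_T (p * c) 0) as [E|E].
  - assert (p = 0) by nra. subst. destruct (Req_EM_T 0 0); [ring|lra].
  - destruct (Req_EM_T p 0) as [E2|E2]. subst; lra.
    replace (p * c / b) with (p * (c / b)) by (field; lra).
    unfold log2. rewrite ln_mult by (try apply Rdiv_lt_0_compat; lra). field.
    pose proof ln2_pos; lra.
Qed.

Lemma partD N lam tau : (2 <= N)%nat -> -1 <= lam <= 1 -> -1 <= tau <= 1 ->
  ((forall y, (y < hsdim N)%nat -> inEAB N lam (hsE N tau y)) ->
     let P := / 2 ^ N * (1 + (2 ^ N - 1) * (lam * tau)) in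
     MI (hsdim N) (hsJoint N lam tau) =
       INR N - hbin P - (1 - P) * log2 (2 ^ N - 1)).
Proof.
  intros HN Hl Ht HE P. assert (HPd : P = / 2 ^ N * (1 + (2 ^ N - 1) * (lam * tau))) by reflexivity.
  clearbody P.
  assert (H0d : (0 < hsdim N)%nat) by (rewrite hsdim_S; lia).
  destruct (partA N lam tau HN (HE O H0d)) as [La Ua].
  pose proof (D_ge4 N HN) as HD.
  assert (Hlt1 : lam * tau <= 1) by nra.
  set (lt := lam * tau) in *. set (D := 2 ^ N) in *.
  set (A := / D * (lt + / D * (1 - lt))). set (B := / D * (/ D * (1 - lt))).
  assert (Hj : forall x y, (x < hsdim N)%nat -> (y < hsdim N)%nat ->
            hsJoint N lam tau x y = if Nat.eqb y x then A else B).
  { intros x y Hx Hy. unfold hsJoint. rewrite partC by auto. fold lt D.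
    unfold A, B. destruct (Nat.eqb y x); ring. }
  assert (Row : forall x, (x < hsdim N)%nat -> sumR (hsdim N) (fun y => hsJoint N lam tau x y) = / D).
  { intros x Hx. rewrite (sumR_ext _ _ (fun y => if Nat.eqb y x then A else B)) by (intros; apply Hj; auto).
    rewrite sumR_ite, INR_hsdim by auto. fold D. unfold A, B. field. lra. }
  assert (Col : forall y, (y < hsdim N)%nat -> sumR (hsdim N) (fun x => hsJoint N lam tau x y) = / D).
  { intros y Hy. rewrite (sumR_ext _ _ (fun x => if Nat.eqb x y then A else B)).
    rewrite sumR_ite, INR_hsdim by auto. fold D. unfold A, B. field. lra.
    intros x Hx. rewrite Hj by auto. rewrite Nat.eqb_sym. auto. }
  unfold MI.
  rewrite (sumR_ext _ _ (fun _ => plogq A (/ D * / D) + (INR (hsdim N) - 1) * plogq B (/ D * / D))).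
  2:{ intros x Hx.
      rewrite (sumR_ext _ _ (fun y => if Nat.eqb y x then plogq A (/ D * / D) else plogq B (/ D * / D))).
      apply sumR_ite; auto.
      intros y Hy. rewrite Row, Col, Hj by auto. destruct (Nat.eqb y x); auto. }
  rewrite sumR_const, INR_hsdim. fold D.
  assert (HP0 : 0 <= P).
  { rewrite HPd. apply Rmult_le_pos. left; apply Rinv_0_lt_compat; lra.
    apply (Rmult_le_compat_l (D - 1)) in La; [|lra].
    replace ((D - 1) * - (1 / (D - 1))) with (-1) in La by (field; lra). lra. }
  assert (HQ0 : 0 <= 1 - P).
  { rewrite HPd. replace (1 - / D * (1 + (D - 1) * lt)) with ((D - 1) * (1 - lt) / D) by (field; lra).
    apply Rmult_le_pos; [nra|]. left; apply Rinv_0_lt_compat; lra. }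
  replace A with (P * / D) by (unfold A; rewrite HPd; field; lra).
  replace B with ((1 - P) * / (D * (D - 1))) by (unfold B; rewrite HPd; field; lra).
  assert (HiD : 0 < / D) by (apply Rinv_0_lt_compat; lra).
  assert (Hb : 0 < / D * / D) by nra.
  rewrite !plogq_xlog; auto.
  2:{ apply Rinv_0_lt_compat; nra. }
  replace (/ D / (/ D * / D)) with D by (field; lra).
  replace (/ (D * (D - 1)) / (/ D * / D)) with (D * / (D - 1)) by (field; lra).
  unfold hbin, log2. rewrite ln_mult by (try apply Rinv_0_lt_compat; lra).
  rewrite ln_Rinv by lra. unfold D. rewrite ln_pow by lra. fold D.
  pose proof ln2_pos. field. split; lra.
Qed.

Theorem mainTheorem13 (N : nat) (lam tau : R) :
  (2 <= N)%nat -> -1 <= lam <= 1 -> -1 <= tau <= 1 ->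
  meq (hsdim N) (fun i j => sumR (hsdim N) (fun mu => hsE N tau mu i j))
      (outer uvec uvec) /\
  (inEAB N lam (hsE N tau O) ->
     - (1 / (2 ^ N - 1)) <= lam * tau <= 1 / (2 ^ N - 3)) /\
  (forall x y, (x < hsdim N)%nat -> (y < hsdim N)%nat ->
     inner (hsdim N) (hsE N tau y) (hsPhi N lam x) =
       lam * tau * (if Nat.eqb y x then 1 else 0) + / 2 ^ N * (1 - lam * tau)) /\
  ((forall y, (y < hsdim N)%nat -> inEAB N lam (hsE N tau y)) ->
     let P := / 2 ^ N * (1 + (2 ^ N - 1) * (lam * tau)) in
     MI (hsdim N) (hsJoint N lam tau) =
       INR N - hbin P - (1 - P) * log2 (2 ^ N - 1)).
Proof.
  intros HN Hl Ht. split; [apply partSum|]. split; [apply partA; auto|].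
  split; [intros; apply partC; auto|]. apply partD; auto.
Qed.
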